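(* Every Abel sequentially compact subset of $\mathbb{R}$ is ward compact.
   Context: A sequence $(p_n)_{n\ge0}$ is Abel convergent to $\ell$ if $\sum_{k=0}^{\infty}p_k x^k$ converges for every $0\le x<1$ and $\lim_{x\to 1^-}(1-x)\sum_{k=0}^{\infty}p_k x^k=\ell$. A subset $F\subseteq\mathbb{R}$ is Abel sequentially compact if every sequence of points of $F$ has a subsequence Abel convergent to a limit belonging to $F$. A sequence $(p_n)$ is quasi-Cauchy if $\lim_{n\to\infty}(p_{n+1}-p_n)=0$. A subset $E\subseteq\mathbb{R}$ is ward compact if every sequence of points of $E$ has a quasi-Cauchy subsequence. *)

(* Defs.v *)
From Stdlib Require Import Reals.
From Coquelicot Require Import Coquelicot.
Open Scope R_scope.

Definition abel_convergent (p : nat -> R) (l : R) : Prop :=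
  (forall x : R, 0 <= x < 1 -> ex_series (fun k => p k * x ^ k)) /\
  filterlim (fun x => (1 - x) * Series (fun k => p k * x ^ k))
            (at_left 1) (locally l).

Definition subseq_index (phi : nat -> nat) : Prop :=
  forall n : nat, (phi n < phi (S n))%nat.

Definition abel_seq_compact (F : R -> Prop) : Prop :=
  forall p : nat -> R, (forall n, F (p n)) ->
    exists phi : nat -> nat, subseq_index phi /\
      exists l : R, F l /\ abel_convergent (fun n => p (phi n)) l.

Definition quasi_cauchy (p : nat -> R) : Prop :=
  is_lim_seq (fun n => p (S n) - p n) 0.

Definition ward_compact (E : R -> Prop) : Prop :=
  forall p : nat -> R, (forall n, E (p n)) ->
    exists phi : nat -> nat, subseq_index phi /\ quasi_cauchy (fun n => p (phi n)).

(* Main.v *)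
Require Import Defs.
From Stdlib Require Import Reals.
From Coquelicot Require Import Coquelicot.
From Stdlib Require Import Lra Lia Classical ClassicalEpsilon.
Open Scope R_scope.

Lemma phi_ge (phi : nat -> nat) : subseq_index phi -> forall n, (n <= phi n)%nat.
Proof. intros H n; induction n; [lia|]. specialize (H n); lia. Qed.

Lemma abel_bounded (F : R -> Prop) :
  abel_seq_compact F -> exists M, forall y, F y -> Rabs y <= M.
Proof.
  intros H. apply NNPP; intros Hn.
  assert (Hy : forall n : nat, exists y, F y /\ 2 ^ n < Rabs y).
  { intros n. apply NNPP; intros Hc. apply Hn. exists (2 ^ n). intros y Fy.
    apply Rnot_lt_le. intros Hl. apply Hc. now exists y. }
  set (p := fun n => proj1_sig (constructive_indefinite_description _ (Hy n))).
  assert (Hp : forall n, F (p n) /\ 2 ^ n < Rabs (p n)).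
  { intros n. exact (proj2_sig (constructive_indefinite_description _ (Hy n))). }
  destruct (H p (fun n => proj1 (Hp n))) as [phi [Hphi [l [_ [Hs _]]]]].
  assert (Hx : 0 <= / 2 < 1) by lra.
  pose proof (ex_series_lim_0 _ (Hs _ Hx)) as Hl.
  apply is_lim_seq_spec in Hl. destruct (Hl (mkposreal 1 Rlt_0_1)) as [N HN].
  specialize (HN N (le_n N)). simpl in HN. rewrite Rminus_0_r, Rabs_mult in HN.
  rewrite <- RPow_abs, (Rabs_pos_eq (/ 2)) in HN by lra.
  assert (h1 : 2 ^ N <= 2 ^ phi N) by (apply Rle_pow; [lra | apply phi_ge; auto]).
  destruct (Hp (phi N)) as [_ h2].
  assert (h3 : 2 ^ N * (/ 2) ^ N = 1).
  { rewrite <- Rpow_mult_distr. replace (2 * / 2) with 1 by field. apply pow1. }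
  assert (h4 : 0 < (/ 2) ^ N) by (apply pow_lt; lra).
  assert (2 ^ N * (/2)^N < Rabs (p (phi N)) * (/2)^N) by (apply Rmult_lt_compat_r; lra).
  lra.
Qed.

Theorem corollary19 (F : R -> Prop) :
  abel_seq_compact F -> ward_compact F.
Proof.
  intros H p Hp.
  destruct (abel_bounded F H) as [M HM].
  assert (HX : forall n, (fun c => -M <= c <= M) (p n)).
  { intros n. specialize (HM _ (Hp n)). simpl. apply Rabs_le_between; auto. }
  destruct (Bolzano_Weierstrass p _ (compact_P3 (-M) M) HX) as [l Hl].
  assert (Hg : forall N k : nat, exists m, (N <= m)%nat /\ Rabs (p m - l) < (/2) ^ k).
  { intros N k.
    assert (hp : 0 < (/2) ^ k) by (apply pow_lt; lra).
    destruct (Hl (fun y => Rabs (y - l) < (/2)^k) N) as [m Hm].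
    - exists (mkposreal _ hp). intros y Hy. exact Hy.
    - exists m; exact Hm. }
  set (g := fun N k => proj1_sig (constructive_indefinite_description _ (Hg N k))).
  assert (Hgp : forall N k, (N <= g N k)%nat /\ Rabs (p (g N k) - l) < (/2) ^ k).
  { intros N k. exact (proj2_sig (constructive_indefinite_description _ (Hg N k))). }
  set (phi := fix phi n := match n with O => g O O | S n => g (S (phi n)) (S n) end).
  assert (Hphi : forall n, Rabs (p (phi n) - l) < (/2) ^ n).
  { intros [|n]; simpl; apply Hgp. }
  exists phi. split.
  - intros n. simpl. destruct (Hgp (S (phi n)) (S n)). lia.
  - unfold quasi_cauchy.
    assert (L : is_lim_seq (fun n => 2 * (/2)^n) 0).
    { assert (Hq : Rabs (/2) < 1) by (rewrite Rabs_pos_eq; lra).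
      pose proof (is_lim_seq_scal_l _ 2 _ (is_lim_seq_geom (/2) Hq)) as L.
      simpl in L. rewrite Rmult_0_r in L. exact L. }
    apply is_lim_seq_le_le with (u := fun n => -(2 * (/2)^n)) (w := fun n => 2 * (/2)^n).
    + intros n. pose proof (Hphi n). pose proof (Hphi (S n)). simpl in *.
      apply Rabs_def2 in H0. apply Rabs_def2 in H1.
      assert (0 < (/2)^n) by (apply pow_lt; lra). lra.
    + pose proof (proj1 (is_lim_seq_opp _ _) L) as L'. simpl in L'. rewrite Ropp_0 in L'. exact L'.
    + exact L.
Qed.
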